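(* For every $Q\in\mathcal{P}$ and every $v>0$, $$D^*(v,Q)=\inf\{D(P\Vert Q): P\in\mathcal{P},\ V(P,Q)=v\}.$$
   Context: Let $(\Omega,\mathcal{F},\mu)$ be a finite or $\sigma$-finite measure space, and let $\mathcal{P}$ be the set of probability measures on $(\Omega,\mathcal{F})$ absolutely continuous with respect to $\mu$. For $P,Q\in\mathcal{P}$ the lower-case letters $p,q$ denote their densities with respect to $\mu$. The Kullback–Leibler divergence is $D(P\Vert Q)=\int\ln\frac{dP}{dQ}\,dP$ if $P\ll Q$, and $+\infty$ otherwise. The total variation distance is $V(P,Q)=\int_\Omega|p-q|\,d\mu$. For $v>0$ define $D^*(v,Q)=\inf\{D(P\Vert Q):P\in\mathcal{P},\ V(P,Q)\ge v\}$. All infima over empty sets equal $+\infty$. *)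

(* Defs.v *)
From HB Require Import structures.
From mathcomp Require Import all_boot all_order all_algebra.
From mathcomp Require Import all_classical all_reals all_analysis.
Set Implicit Arguments. Unset Strict Implicit. Unset Printing Implicit Defensive.
Import Order.TTheory GRing.Theory Num.Theory.
Local Open Scope classical_set_scope.
Local Open Scope ring_scope.
Local Open Scope ereal_scope.

Section Defs.
Context {d : measure_display} {T : measurableType d} {R : realType}.
Variable mu : {measure set T -> \bar R}.

(* An element of the class P of probability measures absolutely continuous
   w.r.t. mu, represented (as in the paper) by its density p w.r.t. mu:
   P(A) = \int_A p dmu. *)
Definition is_density (p : T -> R) : Prop :=
  [/\ measurable_fun setT p, (forall x, (0 <= p x)%R)
    & \int[mu]_x (p x)%:E = 1].

Definition dens_meas (p : T -> R) (A : set T) : \bar R :=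
  \int[mu]_(x in A) (p x)%:E.

Definition dens_abs_cont (p q : T -> R) : Prop :=
  forall A, measurable A -> dens_meas q A = 0 -> dens_meas p A = 0.

(* Kullback-Leibler divergence D(P||Q) = \int ln (dP/dQ) dP if P << Q,
   +oo otherwise; here dP/dQ = p/q and dP = p dmu. *)
Definition KL (p q : T -> R) : \bar R :=
  if `[< dens_abs_cont p q >] then
    \int[mu]_x ((p x * ln (p x / q x))%R)%:E
  else +oo.

Definition TV (p q : T -> R) : \bar R := \int[mu]_x (`|p x - q x|%R)%:E.

(* D^*(v,Q) = inf { D(P||Q) : P in P, V(P,Q) >= v } (inf of empty set = +oo). *)
Definition Dstar (v : R) (q : T -> R) : \bar R :=
  ereal_inf [set KL p q | p in [set p | is_density p /\ v%:E <= TV p q]].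

End Defs.

(* Main.v *)
Require Import Defs.
From HB Require Import structures.
From mathcomp Require Import all_boot all_order all_algebra.
From mathcomp Require Import all_classical all_reals all_analysis.
From mathcomp Require Import measurable_realfun exp.
From mathcomp Require Import ring lra.
Import Order.TTheory GRing.Theory Num.Theory.
Local Open Scope classical_set_scope.
Local Open Scope classical_set_scope.
Local Open Scope ring_scope.
Lemma measurable_inv (R : realType) : measurable_fun setT (@GRing.inv R).
Proof.
have -> : (@GRing.inv R) = (fun x => if x == 0 then 0 else x^-1).
  by apply/funext => x; case: eqP => [->|]; rewrite ?invr0.
apply: measurable_fun_if => //.
- exact: measurable_realfun.measurable_fun_eqr.
- apply: (measurable_funS (E := [set x : R | x != 0])).
  + apply: open_measurable; exact: open_neq.
  + by move=> x [_ /=] ->.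
  + apply: open_continuous_measurable_fun; first exact: open_neq.
    by move=> x; rewrite inE => /inv_continuous.
Qed.
Lemma ln_le_sub1 (R : realType) (x : R) : 0 < x -> ln x <= x - 1.
Proof.
move=> x0; have := @le_ln1Dx R (x - 1).
have -> : 1 + (x - 1) = x by ring.
apply; lra.
Qed.

Lemma ln0' (R : realType) : ln (0 : R) = 0.
Proof. by rewrite ln0. Qed.

Lemma tangent_ln (R : realType) (a b : R) : 0 <= a -> 0 < b ->
  b * ln b + (ln b + 1) * (a - b) <= a * ln a.
Proof.
move=> a0 b0; have [->|a0'] := eqVneq a 0.
  rewrite ln0' mulr0.
  have -> : b * ln b + (ln b + 1) * (0 - b) = - b by ring.
  lra.
have ap : 0 < a by rewrite lt_neqAle eq_sym a0' a0.
have H := @ln_le_sub1 R (b / a) (divr_gt0 b0 ap).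
rewrite ln_div ?posrE // in H.
have H2 : a * (ln b - ln a) <= a * (b / a - 1) by rewrite ler_wpM2l // ltW.
have E : a * (b / a - 1) = b - a by field.
rewrite E in H2.
nra.
Qed.

Lemma convex_key (R : realType) (X t : R) : 0 <= X -> 0 < t <= 1 ->
  (1 - t + t * X) * ln (1 - t + t * X) <= t * (X * ln X).
Proof.
move=> X0 /andP[t0 t1].
have Y0 : 0 <= 1 - t + t * X by nra.
have [Ye|Yn] := eqVneq (1 - t + t * X) 0.
  rewrite Ye mul0r; have -> : X = 0 by nra.
  by rewrite mul0r mulr0.
have Yp : 0 < 1 - t + t * X by rewrite lt_neqAle eq_sym Yn Y0.
have T1 := @tangent_ln R _ _ X0 Yp.
have T2 := @tangent_ln R _ _ ler01 Yp.
rewrite ln1 mulr0 in T2.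
move: T1 T2; set L := ln (1 - t + t * X); set M := ln X.
clearbody L M => T1 T2.
nra.
Qed.

Lemma pt_key (R : realType) (p q t : R) : 0 <= p -> 0 <= q -> 0 < t <= 1 ->
  ((1 - t) * q + t * p) * ln (((1 - t) * q + t * p) / q) <= t * (p * ln (p / q)).
Proof.
move=> p0 q0 ht.
have [->|qn] := eqVneq q 0.
  by rewrite invr0 !mulr0 ln0' !mulr0.
have qp : 0 < q by rewrite lt_neqAle eq_sym qn q0.
have -> : ((1 - t) * q + t * p) / q = 1 - t + t * (p / q) by field.
have -> : (1 - t) * q + t * p = q * (1 - t + t * (p / q)) by field.
have -> : t * (p * ln (p / q)) = q * (t * ((p / q) * ln (p / q))) by field.
rewrite -[in leLHS]mulrA ler_wpM2l ?(ltW qp) //; apply: convex_key => //.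
exact: divr_ge0.
Qed.

Lemma gibbs_key (R : realType) (p q : R) : 0 <= p -> 0 < q ->
  p - q <= p * ln (p / q).
Proof.
move=> p0 q0.
have T := @tangent_ln R _ _ (divr_ge0 p0 (ltW q0)) ltr01.
rewrite ln1 mulr0 !add0r mul1r in T.
have -> : p - q = q * (p / q - 1) by field; rewrite gt_eqF.
have -> : p * ln (p / q) = q * (p / q * ln (p / q)) by field; rewrite gt_eqF.
by rewrite ler_wpM2l // ltW.
Qed.
Local Open Scope ereal_scope.
Lemma le_integral_gen d (T : measurableType d) (R : realType)
  (mu : {measure set T -> \bar R}) (f g : T -> \bar R) :
  measurable_fun setT f -> measurable_fun setT g -> (forall x, f x <= g x) ->
  \int[mu]_x f x <= \int[mu]_x g x.
Proof.
move=> mf mg fg; rewrite (integralE _ _ f) (integralE _ _ g).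
apply: leeB.
- apply: ge0_le_integral => //.
  + exact: measurable_funepos.
  + exact: measurable_funepos.
  + move=> x _; apply: (@funepos_le _ _ setT); [by move=> y _; exact: fg | by rewrite in_setT].
- apply: ge0_le_integral => //.
  + exact: measurable_funeneg.
  + exact: measurable_funeneg.
  + move=> x _; apply: (@funeneg_le _ _ setT); [by move=> y _; exact: fg | by rewrite in_setT].
Qed.

Lemma integralZ_gen d (T : measurableType d) (R : realType)
  (mu : {measure set T -> \bar R}) (t : R) (f : T -> \bar R) :
  (0 <= t)%R -> measurable_fun setT f -> \int[mu]_x f^\- x \is a fin_num ->
  \int[mu]_x (t%:E * f x) = t%:E * \int[mu]_x f x.
Proof.
move=> t0 mf fn; rewrite (integralE _ _ (fun x => t%:E * f x)) (integralE _ _ f).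
rewrite ge0_funeposM // ge0_funenegM //.
have E1 : \int[mu]_x (t%:E * f^\+ x) = t%:E * \int[mu]_x f^\+ x.
  by apply: ge0_integralZl_EFin => //; exact: measurable_funepos.
have E2 : \int[mu]_x (t%:E * f^\- x) = t%:E * \int[mu]_x f^\- x.
  by apply: ge0_integralZl_EFin => //; exact: measurable_funeneg.
rewrite E1 E2 (@muleBr _ t%:E (\int[mu]_x f^\+ x) (\int[mu]_x f^\- x)) //; by apply: fin_num_adde_defl; rewrite fin_numN.
Qed.
Lemma mixture_integral d (T : measurableType d) (R : realType)
  (mu : {measure set T -> \bar R}) (A : set T) (p q : T -> R) (t : R) :
  measurable A -> measurable_fun setT p -> measurable_fun setT q ->
  (forall x, (0 <= p x)%R) -> (forall x, (0 <= q x)%R) -> (0 <= t)%R -> (t <= 1)%R ->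
  \int[mu]_(x in A) (((1 - t) * q x + t * p x)%R%:E) =
  (1 - t)%:E * \int[mu]_(x in A) (q x)%:E + t%:E * \int[mu]_(x in A) (p x)%:E.
Proof.
move=> mA mp mq p0 q0 t0 t1.
have mpA : measurable_fun A (fun x => (p x)%:E).
  by apply/measurable_EFinP; exact: measurable_funTS.
have mqA : measurable_fun A (fun x => (q x)%:E).
  by apply/measurable_EFinP; exact: measurable_funTS.
under eq_integral do rewrite EFinD !EFinM.
rewrite ge0_integralD //.
- rewrite ge0_integralZl_EFin ?subr_ge0 //; last by move=> x _; rewrite lee_fin.
  by rewrite ge0_integralZl_EFin //; move=> x _; rewrite lee_fin.
- by move=> x _; rewrite -EFinM lee_fin mulr_ge0 ?subr_ge0.
- exact: measurable_funeM.
- by move=> x _; rewrite -EFinM lee_fin mulr_ge0.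
- exact: measurable_funeM.
Qed.

Lemma mkl d (T : measurableType d) (R : realType) (p q : T -> R) :
  measurable_fun setT p -> measurable_fun setT q ->
  measurable_fun setT (fun x => (p x * ln (p x / q x))%R).
Proof.
move=> mp mq; apply: measurable_funM => //.
apply: measurableT_comp; first exact: measurable_ln.
apply: measurable_funM => //.
apply: measurableT_comp => //; exact: measurable_inv.
Qed.

Lemma integrable_dens d (T : measurableType d) (R : realType)
  (mu : {measure set T -> \bar R}) (f : T -> R) :
  measurable_fun setT f -> (forall x, (0 <= f x)%R) ->
  \int[mu]_x (f x)%:E < +oo -> mu.-integrable setT (EFin \o f).
Proof.
move=> mf f0 fi; apply/integrableP; split; first exact/measurable_EFinP.
rewrite (eq_integral (fun x => (f x)%:E)) // => x _.
by rewrite /comp /= ger0_norm.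
Qed.

Theorem lemma2 (d : measure_display) (T : measurableType d) (R : realType)
    (mu : {measure set T -> \bar R}) (hmu : sigma_finite setT mu)
    (q : T -> R) (hq : is_density mu q) (v : R) (hv : (0 < v)%R) :
  Dstar mu v q =
  ereal_inf [set KL mu p q | p in [set p | is_density mu p /\ TV mu p q = v%:E]].
Proof.
apply/eqP; rewrite eq_le; apply/andP; split.
  apply: le_ereal_inf => _ [p [hp hTV] <-]; exists p => //.
  by split => //; rewrite hTV.
apply: le_ereal_inf_tmp => _ [p [hp hTV] <-].
case: hq => mq q0 iq; case: (hp) => mp p0 ip.
rewrite [X in _ <= X]/KL; case: asboolP => hac; last by rewrite leey.
have mpE : measurable_fun setT (fun x => (p x)%:E) by exact/measurable_EFinP.
have mqE : measurable_fun setT (fun x => (q x)%:E) by exact/measurable_EFinP.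
have mabs : measurable_fun setT (fun x => (`|p x - q x|)%:E).
  apply/measurable_EFinP; apply: measurableT_comp => //.
  exact: measurable_funB.
have TVge0 : 0 <= TV mu p q by apply: integral_ge0 => x _; rewrite lee_fin.
have TVle : TV mu p q <= 2%:E.
  rewrite /TV (_ : 2%:E = \int[mu]_x ((p x)%:E + (q x)%:E)).
    apply: ge0_le_integral => //.
    - exact: emeasurable_funD.
    - by move=> x _; rewrite -EFinD lee_fin (le_trans (ler_normB _ _)) // !ger0_norm.
  rewrite ge0_integralD //; first by rewrite ip iq.
  - by move=> x _; rewrite lee_fin.
  - by move=> x _; rewrite lee_fin.
have TVfin : TV mu p q \is a fin_num.
  by rewrite ge0_fin_numE // (le_lt_trans TVle) // ltry.
set Vr := fine (TV mu p q).
have hV : TV mu p q = Vr%:E by rewrite fineK.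
have vV : (v <= Vr)%R by rewrite -lee_fin -hV.
have Vp : (0 < Vr)%R by exact: lt_le_trans vV.
set t := (v / Vr)%R.
have t0 : (0 < t)%R by exact: divr_gt0.
have t0' : (0 <= t)%R by exact: ltW.
have t1 : (t <= 1)%R by rewrite ler_pdivrMr // mul1r.
set pt := fun x => ((1 - t) * q x + t * p x)%R.
have mpt : measurable_fun setT pt.
  by apply: measurable_funD; apply: measurable_funM => //; exact: measurable_cst.
have pt0 : forall x, (0 <= pt x)%R.
  by move=> x; rewrite /pt addr_ge0 // mulr_ge0 // ?subr_ge0 // ltW.
have ipt : \int[mu]_x (pt x)%:E = 1.
  rewrite /pt mixture_integral // ip iq !mule1 -EFinD.
  by congr (_%:E); ring.
have TVpt : TV mu pt q = v%:E.
  rewrite /TV; transitivity (\int[mu]_x (t%:E * (`|p x - q x|)%:E)).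
    apply: eq_integral => x _; rewrite -EFinM; congr (_%:E).
    rewrite (_ : (pt x - q x = t * (p x - q x))%R); last by rewrite /pt; ring.
    by rewrite normrM ger0_norm // ltW.
  rewrite ge0_integralZl_EFin ?ltW //.
  rewrite -/(TV mu p q) hV -EFinM; congr (_%:E).
  by rewrite /t mulrVK // unitfE gt_eqF.
have hacpt : dens_abs_cont mu pt q.
  move=> A mA hA; rewrite /dens_meas /pt mixture_integral //.
  by rewrite -/(dens_meas mu q A) -/(dens_meas mu p A) hA (hac A mA hA) !mule0 adde0.
apply: le_trans; first apply: ereal_inf_lbound.
  by exists pt => //; split => //; split.
rewrite /KL asboolT //.
set gr := fun x => (p x * ln (p x / q x))%R.
have mg : measurable_fun setT gr := @mkl _ _ _ _ _ mp mq.
have mgE : measurable_fun setT (fun x => (gr x)%:E) by exact/measurable_EFinP.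
have mgt : measurable_fun setT (fun x => (pt x * ln (pt x / q x))%R) := @mkl _ _ _ _ _ mpt mq.
have gq : forall x, (- q x <= gr x)%R.
  move=> x; have [qx0|qxn] := eqVneq (q x) 0%R.
    by rewrite /gr qx0 invr0 mulr0 ln0' mulr0 oppr0.
  have qp : (0 < q x)%R by rewrite lt_neqAle eq_sym qxn q0.
  apply: (le_trans _ (@gibbs_key R _ _ (p0 x) qp)); have := p0 x; lra.
have gneg : \int[mu]_x ((fun x => (gr x)%:E)^\- x) \is a fin_num.
  rewrite ge0_fin_numE; last by apply: integral_ge0 => x _; exact: funeneg_ge0.
  apply: (@le_lt_trans _ _ (\int[mu]_x (q x)%:E)); last by rewrite iq ltry.
  apply: ge0_le_integral => //.
  - exact: measurable_funeneg.
  - move=> x _; rewrite funenegE ge_max; apply/andP; split.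
      by rewrite -EFinN lee_fin lerNl gq.
    by rewrite lee_fin.
have mN : measurable [set x | q x = 0%R].
  by have := mq measurableT _ (measurable_set1 0%R); rewrite setTI.
set N := [set x | q x = 0%R] in mN *.
have hN : \int[mu]_(x in N) (p x)%:E = 0.
  apply: (hac N mN); rewrite /dens_meas; apply: integral0_eq => x Nx.
  by rewrite Nx.
have m1 : measurable_fun setT (fun x => (p x * \1_(~` N) x)%R).
  apply: measurable_funM => //; apply: measurable_indic; exact: measurableC.
have m2 : measurable_fun setT (fun x => (p x * \1_N x)%R).
  by apply: measurable_funM => //; apply: measurable_indic.
have ip1 : \int[mu]_x ((p x * \1_(~` N) x)%R)%:E = 1.
  have : \int[mu]_x (p x)%:E = \int[mu]_x (((p x * \1_(~` N) x)%R)%:E + ((p x * \1_N x)%R)%:E).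
    apply: eq_integral => x _; rewrite -EFinD -mulrDr /indic in_setC.
    by case: (x \in N) => /=; rewrite ?addr0 ?add0r mulr1.
  rewrite ge0_integralD //; first last.
  - exact/measurable_EFinP.
  - by move=> x _; rewrite lee_fin mulr_ge0 // indic_ge0.
  - exact/measurable_EFinP.
  - by move=> x _; rewrite lee_fin mulr_ge0 // indic_ge0.
  have -> : \int[mu]_x ((p x * \1_N x)%R)%:E = 0.
    rewrite -hN (integral_mkcond N); apply: eq_integral => x _.
    by rewrite /patch /indic; case: (x \in N) => /=; rewrite ?mulr1 ?mulr0.
  by rewrite adde0 ip.
have gibbs : 0 <= \int[mu]_x (gr x)%:E.
  have -> : 0 = \int[mu]_x (((p x * \1_(~` N) x)%R)%:E - (q x)%:E).
    rewrite integralB_EFin //; first by rewrite ip1 iq subee.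
    - apply: integrable_dens => //; first by move=> x; rewrite mulr_ge0 // indic_ge0.
      by rewrite ip1 ltry.
    - by apply: integrable_dens => //; rewrite iq ltry.
  apply: le_integral_gen => //.
    apply: emeasurable_funB; first exact/measurable_EFinP.
    exact/measurable_EFinP.
  move=> x; rewrite -EFinB lee_fin /gr /indic in_setC.
  have [qx0|qxn] := eqVneq (q x) 0%R.
    have -> : x \in N by rewrite inE.
    by rewrite /= mulr0 qx0 subr0 invr0 mulr0 ln0' mulr0.
  have -> : x \notin N by apply/negP; rewrite inE; exact/eqP.
  have qp : (0 < q x)%R by rewrite lt_neqAle eq_sym qxn q0.
  by rewrite /= mulr1; exact: gibbs_key.
apply: (@le_trans _ _ (\int[mu]_x (t%:E * (gr x)%:E))).
  apply: le_integral_gen => //.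
  - exact/measurable_EFinP.
  - exact: measurable_funeM.
  - move=> x; rewrite -EFinM lee_fin; apply: pt_key => //.
    by rewrite t0 t1.
rewrite integralZ_gen //.
by apply: gee_pMl => //; rewrite lee_fin.
Qed.
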